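(* Let $R$ be a finite commutative ring, $K\le R^\times$, $\mathcal C=\mathrm{Cyc}(K,R)$, $\mathcal A=\mathcal A(K,R)$ its multiplication S-ring, $u=0$ and $v=1$. Then (1) for every $f\in\mathrm{Aut}(\mathcal C_{u,v})$ the set $R^\times$ is $f$-invariant, and the mapping $f\mapsto f^{R^\times}$ (restriction to $R^\times$) is a homomorphism from $\mathrm{Aut}(\mathcal C_{u,v})$ to $\mathrm{Aut}(\mathcal A)$; (2) if $R$ is a field, this mapping is an isomorphism.
   Context: All rings have an identity. A scheme on a finite set $V$ is a pair $(V,\mathcal R)$, $\mathcal R$ a partition of $V\times V$ into nonempty basis relations, closed under transposition, with the diagonal a union of basis relations and with the intersection numbers $|\{y:(x,y)\in R_1,(y,z)\in R_2\}|$ depending only on the basis relation containing $(x,z)$; relations are unions of basis relations. $\mathrm{Aut}$ of a scheme is the group of permutations fixing every basis relation; $\mathrm{Iso}$ is the group of permutations permuting basis relations. For a set $\mathcal M$ of relations, $[\mathcal C,\mathcal M]$ is the smallest scheme having all relations of $\mathcal C$ and of $\mathcal M$ as relations; $\mathcal C_{w}=[\mathcal C,\{(w,w)\}]$, $\mathcal C_{u,v}=[\mathcal C,\{(u,u)\},\{(v,v)\}]$ (so $\mathrm{Aut}(\mathcal C_{u,v})$ is the pointwise stabilizer of $u,v$ in $\mathrm{Aut}(\mathcal C)$). If $\Delta(U)$ is a relation, $\mathcal C_U$ is the scheme on $U$ with basis relations the nonempty $S\cap U^2$. For $\Gamma\le\mathrm{Iso}(\mathcal C)$, $\mathcal C^\Gamma$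 is the scheme whose relations are the $\Gamma$-invariant relations of $\mathcal C$. $\mathrm{Cyc}(K,R)$ is the scheme on $R$ with basis relations $\{(x,y): y-x\in rK\}$, $r\in R$. With $u=0$, $\mathcal C'=((\mathcal C_u)_{R^\times})^{R^\times_{right}}$ where $R^\times_{right}=\{x\mapsto xa:a\in R^\times\}$; its basis relations are of the form $\{(g,xg):g\in R^\times,x\in X\}$, $X\subseteq R^\times$. The multiplication S-ring $\mathcal A(K,R)$ is the S-ring over $R^\times$ (subring of $\mathbb Z[R^\times]$ with $\mathbb Z$-basis the sums over the sets $X$) whose basic sets are these $X$, and $\mathrm{Aut}(\mathcal A)$ is the stabilizer of the point $1$ in $\mathrm{Aut}(\mathcal C')$. *)

(* Defs.v *)
From HB Require Import structures.
From mathcomp Require Import all_boot all_order all_algebra all_fingroup.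
Set Implicit Arguments. Unset Strict Implicit. Unset Printing Implicit Defensive.
Import GRing.Theory.
Local Open Scope ring_scope.

Section Schemes.
Variable T : finType.

Definition diagT : {set T * T} := [set xy | xy.1 == xy.2].
Definition transp (S : {set T * T}) : {set T * T} := [set xy | (xy.2, xy.1) \in S].

Definition is_scheme (P : {set {set T * T}}) : Prop :=
  [/\ partition P [set: T * T],
      (forall S, S \in P -> transp S \in P),
      (forall S, S \in P -> S \subset diagT \/ [disjoint S & diagT]) &
      (forall S1 S2 S, S1 \in P -> S2 \in P -> S \in P ->
        forall x z x' z', (x, z) \in S -> (x', z') \in S ->
        #|[set y | ((x, y) \in S1) && ((y, z) \in S2)]|
        = #|[set y | ((x', y) \in S1) && ((y, z') \in S2)]|)].

Definition is_rel (P : {set {set T * T}}) (X : {set T * T}) : Prop :=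
  forall S, S \in P -> S \subset X \/ [disjoint S & X].

(* X is a relation of [C, M], the smallest scheme having all relations of C
   (basis P) and all relations in M as relations. *)
Definition closure_rel (P : {set {set T * T}}) (M : seq {set T * T})
    (X : {set T * T}) : Prop :=
  forall Q, is_scheme Q -> (forall Y, is_rel P Y -> is_rel Q Y) ->
    (forall Y, Y \in M -> is_rel Q Y) -> is_rel Q X.

End Schemes.

Section Cyc.
Variable R : finComUnitRingType.
Variable K : {group {unit R}}.

Definition unitsR : {set R} := [set x : R | x \is a GRing.unit].

Definition orbK (r : R) : {set R} := [set r * val k | k in K].

Definition CycB : {set {set R * R}} :=
  [set [set xy : R * R | xy.2 - xy.1 \in orbK r] | r : R].

Definition AutCyc : {set {perm R}} :=
  [set f : {perm R} | [forall S in CycB, forall x, forall y,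
     ((x, y) \in S) == ((f x, f y) \in S)]].

Definition AutCuv : {set {perm R}} :=
  [set f in AutCyc | (f 0 == 0) && (f 1 == 1)].

(* relations of C_u = [C, {(0,0)}] *)
Definition Cu_rel (X : {set R * R}) : Prop :=
  closure_rel CycB [:: [set ((0 : R), (0 : R))]] X.

Definition CuU_rel (X : {set R * R}) : Prop :=
  exists Y, Cu_rel Y /\ X = Y :&: setX unitsR unitsR.

(* relations of C' = ((C_u)_{R^x})^{R^x_right}: the right-R^x-invariant ones *)
Definition Cp_rel (X : {set R * R}) : Prop :=
  CuU_rel X /\
  (forall a x y, a \is a GRing.unit -> (x, y) \in X -> (x * a, y * a) \in X).

Definition Cp_basis (X : {set R * R}) : Prop :=
  [/\ Cp_rel X, X != set0 &
      forall Y, Cp_rel Y -> Y \subset X -> Y = set0 \/ Y = X].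

(* Aut(C'), permutations of R^x encoded as permutations of R supported on R^x *)
Definition AutCp (g : {perm R}) : Prop :=
  perm_on unitsR g /\
  forall X, Cp_basis X -> forall x y, ((x, y) \in X) = ((g x, g y) \in X).

(* Aut(A(K,R)): the stabilizer of 1 in Aut(C') *)
Definition AutA (g : {perm R}) : Prop := AutCp g /\ g 1 = 1.

End Cyc.

(* Main.v *)
Require Import Defs.
From HB Require Import structures.
From mathcomp Require Import all_boot all_order all_algebra all_fingroup.
From Stdlib Require Import Classical.
Set Implicit Arguments. Unset Strict Implicit. Unset Printing Implicit Defensive.
Import GRing.Theory FinRing.Theory.
Local Open Scope ring_scope.


Section Orb.
Variable R : finComUnitRingType.
Variable K : {group {unit R}}.

Lemma orbKP r a : reflect (exists2 k, k \in K & a = r * val k) (a \in Defs.orbK K r).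
Proof. by apply: (iffP imsetP) => -[k kK ->]; exists k. Qed.

Lemma orbK_refl r : r \in Defs.orbK K r.
Proof. by apply/orbKP; exists 1%g; rewrite ?group1 // val_unit1 mulr1. Qed.

Lemma orbK_eq r a : a \in Defs.orbK K r -> Defs.orbK K a = Defs.orbK K r.
Proof.
case/orbKP=> k kK ->; apply/setP=> b; apply/orbKP/orbKP=> -[k' k'K ->].
  by exists (k * k')%g; rewrite ?groupM // val_unitM mulrA.
exists (k^-1 * k')%g; rewrite ?groupM ?groupV // val_unitM val_unitV.
by rewrite mulrA mulrK //; apply: valP.
Qed.

Lemma orbK_sym r a : a \in Defs.orbK K r -> r \in Defs.orbK K a.
Proof. by move/orbK_eq->; apply: orbK_refl. Qed.



Lemma orbK_mul a a' b b' : a' \in Defs.orbK K a -> b' \in Defs.orbK K b ->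
  a' * b' \in Defs.orbK K (a * b).
Proof.
case/orbKP=> k kK ->; case/orbKP=> k' k'K ->; apply/orbKP.
exists (k * k')%g; rewrite ?groupM // val_unitM.
by rewrite mulrACA.
Qed.

Lemma orbK_unit a a' : a' \in Defs.orbK K a -> (a' \is a GRing.unit) = (a \is a GRing.unit).
Proof. by case/orbKP=> k _ ->; rewrite unitrMl //; apply: valP. Qed.

Lemma orbK_inv a a' : a \is a GRing.unit -> a' \in Defs.orbK K a -> a'^-1 \in Defs.orbK K a^-1.
Proof.
move=> ua; case/orbKP=> k kK ->; apply/orbKP; exists k^-1%g; rewrite ?groupV // val_unitV.
have uk : val k \is a GRing.unit by apply: valP.
by rewrite invrM // mulrC.
Qed.

Lemma orbK_opp a a' : a' \in Defs.orbK K a -> - a' \in Defs.orbK K (- a).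
Proof. by case/orbKP=> k kK ->; apply/orbKP; exists k; rewrite ?mulNr. Qed.

Lemma orbK0 a : a \in Defs.orbK K 0 -> a = 0.
Proof. by case/orbKP=> k _ ->; rewrite mul0r. Qed.

Lemma orbK_same a b r : a \in Defs.orbK K r -> b \in Defs.orbK K r -> Defs.orbK K a = Defs.orbK K b.
Proof. by move=> /orbK_eq -> /orbK_eq ->. Qed.

End Orb.


Section Sch.
Variable T : finType.
Implicit Types (Q : {set {set T * T}}) (A B X S : {set T * T}).

Definition rcomp A B : {set T * T} :=
  [set p | [exists y, ((p.1, y) \in A) && ((y, p.2) \in B)]].

Lemma compP A B x z :
  reflect (exists y, ((x, y) \in A) /\ ((y, z) \in B)) ((x, z) \in rcomp A B).
Proof.
rewrite inE; apply: (iffP existsP) => -[y] /=; first by case/andP; exists y.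
by case=> ? ?; exists y; apply/andP.
Qed.

Lemma scheme_cover Q p : is_scheme Q -> exists2 S, S \in Q & p \in S.
Proof.
case=> /and3P[/eqP cov _ _] _ _ _.
have : p \in cover Q by rewrite cov inE.
by case/bigcupP=> S SQ pS; exists S.
Qed.

Lemma rel_sub Q X S p : is_rel Q X -> S \in Q -> p \in S -> p \in X -> S \subset X.
Proof. by move=> hX SQ pS pX; case: (hX S SQ) => // /disjointFr /(_ pS); rewrite pX. Qed.

Lemma rel_by Q X : (forall S p, S \in Q -> p \in S -> p \in X -> S \subset X) -> is_rel Q X.
Proof.
move=> H S SQ; case: (set_0Vmem (S :&: X)) => [e|[p /setIP[pS pX]]].
  by right; rewrite -setI_eq0 e.
by left; apply: H pS pX.
Qed.

Lemma comp_rel Q A B : is_scheme Q -> is_rel Q A -> is_rel Q B -> is_rel Q (rcomp A B).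
Proof.
move=> sQ hA hB; apply: rel_by => S [x z] SQ pS /compP[y [yA yB]].
have [S1 S1Q yS1] := scheme_cover (x, y) sQ.
have [S2 S2Q yS2] := scheme_cover (y, z) sQ.
have s1 := rel_sub hA S1Q yS1 yA; have s2 := rel_sub hB S2Q yS2 yB.
apply/subsetP=> -[x' z'] qS.
case: sQ => _ _ _ /(_ S1 S2 S S1Q S2Q SQ x z x' z' pS qS) ec.
have : (0 < #|[set y0 | ((x', y0) \in S1) && ((y0, z') \in S2)]|)%N.
  by rewrite -ec; apply/card_gt0P; exists y; rewrite inE yS1 yS2.
case/card_gt0P=> y'; rewrite inE => /andP[h1 h2]; apply/compP; exists y'.
by split; [apply: (subsetP s1) | apply: (subsetP s2)].
Qed.

Lemma rel_setI Q A B : is_rel Q A -> is_rel Q B -> is_rel Q (A :&: B).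
Proof.
move=> hA hB S SQ; case: (hA S SQ) => sA; last first.
  by right; apply: disjointWr sA; apply: subsetIl.
case: (hB S SQ) => sB; first by left; rewrite subsetI sA sB.
by right; apply: disjointWr sB; apply: subsetIr.
Qed.

Lemma rel_setD Q A B : is_rel Q A -> is_rel Q B -> is_rel Q (A :\: B).
Proof.
move=> hA hB S SQ; case: (hA S SQ) => sA; last first.
  by right; apply: disjointWr sA; apply: subsetDl.
case: (hB S SQ) => sB.
  right; rewrite -setI_eq0; apply/eqP/setP=> p; rewrite !inE.
  by case pS: (p \in S); rewrite ?andbF // (subsetP sB _ pS).
left; apply/subsetP=> p pS; rewrite inE (subsetP sA _ pS) andbT.
by rewrite (disjointFr sB pS).
Qed.

Lemma closure_setI P M A B : closure_rel P M A -> closure_rel P M B -> closure_rel P M (A :&: B).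
Proof. by move=> h1 h2 Q a b c; apply: rel_setI; [apply: h1 | apply: h2]. Qed.

Lemma closure_setD P M A B : closure_rel P M A -> closure_rel P M B -> closure_rel P M (A :\: B).
Proof. by move=> h1 h2 Q a b c; apply: rel_setD; [apply: h1 | apply: h2]. Qed.

Variable G : {group {perm T}}.

Definition orb2 (p : T * T) : {set T * T} := [set (h p.1, h p.2) | h : {perm T} in G].
Definition Qo : {set {set T * T}} := [set orb2 p | p : T * T].

Lemma orb2P q p : reflect (exists2 h, h \in G & q = (h p.1, h p.2)) (q \in orb2 p).
Proof. exact: imsetP. Qed.

Lemma orb2_act h p : h \in G -> (h p.1, h p.2) \in orb2 p.
Proof. by move=> hG; apply/orb2P; exists h. Qed.

Lemma orb2_refl p : p \in orb2 p.
Proof. by case: p => a b; have := orb2_act (a, b) (group1 G); rewrite !perm1. Qed.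

Lemma orb2_eq p q : q \in orb2 p -> orb2 q = orb2 p.
Proof.
case/orb2P=> h hG ->; apply/setP=> r; apply/orb2P/orb2P => -[k kG ->] /=.
  by exists (h * k)%g; rewrite ?groupM // !permM.
by exists (h^-1 * k)%g; rewrite ?groupM ?groupV // !permM !permK.
Qed.

Lemma orb2_inv S h a b : S \in Qo -> h \in G -> ((h a, h b) \in S) = ((a, b) \in S).
Proof.
case/imsetP=> p _ -> hG; apply/idP/idP => H.
  rewrite -(orb2_eq H); have := orb2_act (h a, h b) (groupVr hG).
  by rewrite /= !permK.
by rewrite -(orb2_eq H); apply: orb2_act.
Qed.

Lemma Qo_scheme : is_scheme Qo.
Proof.
split.
- apply/and3P; split.
  + apply/eqP/setP=> p; rewrite in_setT; apply/bigcupP; exists (orb2 p).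
      by apply: imset_f.
    exact: orb2_refl.
  + apply/trivIsetP=> A B /imsetP[p _ ->] /imsetP[q _ ->] neq.
    rewrite -setI_eq0; apply/eqP/setP=> r; rewrite inE in_set0.
    apply/negP=> /andP[rp rq]; move: neq; rewrite -(orb2_eq rp) -(orb2_eq rq).
    by rewrite eqxx.
  + apply/negP=> /imsetP[p _ e]; have := orb2_refl p; by rewrite -e in_set0.
- move=> S /imsetP[p _ ->]; apply/imsetP; exists (p.2, p.1) => //.
  apply/setP=> q; rewrite inE; apply/orb2P/orb2P=> -[h hG e]; exists h => //.
    by case: q e => a b /= [-> ->].
  by rewrite e.
- move=> S /imsetP[[a b] _ ->]; case: (eqVneq a b) => [<-|neq].
    by left; apply/subsetP=> q /orb2P[h _ ->]; rewrite inE /=.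
  right; rewrite -setI_eq0; apply/eqP/setP=> q; rewrite !inE.
  apply/negP=> /andP[/orb2P[h _ ->]] /= /eqP /perm_inj e.
  by rewrite e eqxx in neq.
- move=> S1 S2 S S1Q S2Q SQ x z x' z' pS qS.
  have : (x', z') \in orb2 (x, z).
    by case/imsetP: SQ pS qS => p _ -> /orb2_eq ->.
  case/orb2P=> h hG [-> ->] /=.
  rewrite -(card_imset _ (@perm_inj _ h)); apply: eq_card => y.
  rewrite [in RHS]inE; apply/imsetP/andP.
    by case=> w /[!inE] /andP[w1 w2] ->; rewrite !orb2_inv.
  case=> y1 y2; exists (h^-1 y)%g; last by rewrite permKV.
  by rewrite inE -(orb2_inv _ _ S1Q hG) -(orb2_inv _ _ S2Q hG) permKV y1 y2.
Qed.

End Sch.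


Section Cyc.
Variable R : finComUnitRingType.
Variable K : {group {unit R}}.

Notation orb := (Defs.orbK K).
Definition Crel (r : R) : {set R * R} := [set xy : R * R | xy.2 - xy.1 \in orb r].
Definition Z0 : {set R * R} := [set ((0 : R), (0 : R))].

Lemma CrelE r x y : ((x, y) \in Crel r) = (y - x \in orb r).
Proof. by rewrite inE. Qed.

Lemma Crel_in r : Crel r \in CycB K.
Proof. by apply/imsetP; exists r. Qed.

Lemma Crel_relB r : is_rel (CycB K) (Crel r).
Proof.
move=> S /imsetP[r' _ ->].
case: (set_0Vmem (Crel r' :&: Crel r)) => [e|[p /setIP[p1 p2]]].
  by right; rewrite -setI_eq0 e.
left; rewrite inE in p1; rewrite inE in p2.
have e : orb r' = orb r by rewrite -(orbK_eq p1) (orbK_eq p2).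
by apply/subsetP=> q; rewrite !inE e.
Qed.

Lemma type_inv Q S x y x' y' : is_scheme Q ->
  (forall Y, is_rel (CycB K) Y -> is_rel Q Y) -> is_rel Q Z0 ->
  S \in Q -> (x, y) \in S -> (x', y') \in S ->
  [/\ x' \in orb x, y' \in orb y & y' - x' \in orb (y - x)].
Proof.
move=> sQ hB hZ SQ pS qS.
have hC r : is_rel Q (Crel r) by apply: hB; apply: Crel_relB.
have hT : is_rel Q setT by move=> S' _; left; apply: subsetT.
split.
- have hL := comp_rel sQ (hC (- x)) (comp_rel sQ hZ hT).
  have : (x, y) \in rcomp (Crel (- x)) (rcomp Z0 setT).
    apply/compP; exists 0; split; first by rewrite CrelE sub0r orbK_refl.
    by apply/compP; exists 0; split; [by rewrite inE | by rewrite in_setT].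
  move/(rel_sub hL SQ pS)/subsetP/(_ _ qS)/compP=> [w [h1 /compP [v [h2 _]]]].
  move: h2; rewrite inE => /eqP [e _]; move: h1; rewrite e CrelE sub0r.
  by move/orbK_opp; rewrite !opprK.
- have hL := comp_rel sQ (comp_rel sQ hT hZ) (hC y).
  have : (x, y) \in rcomp (rcomp setT Z0) (Crel y).
    apply/compP; exists 0; split; last by rewrite CrelE subr0 orbK_refl.
    by apply/compP; exists 0; split; [by rewrite in_setT | by rewrite inE].
  move/(rel_sub hL SQ pS)/subsetP/(_ _ qS)/compP=> [w [/compP [v [_ h2]] h1]].
  by move: h2 h1; rewrite inE => /eqP [_ ->]; rewrite CrelE subr0.
- have := rel_sub (hC (y - x)) SQ pS; rewrite CrelE orbK_refl => /(_ isT).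
  by move/subsetP/(_ _ qS); rewrite CrelE.
Qed.

Lemma Cu_type (X : {set R * R}) :
  (forall x y x' y', x' \in orb x -> y' \in orb y -> y' - x' \in orb (y - x) ->
     (x, y) \in X -> (x', y') \in X) -> Cu_rel K X.
Proof.
move=> H Q sQ hB hM.
have hZ : is_rel Q Z0 by apply: hM; rewrite mem_head.
apply: rel_by => S [x y] SQ pS pX; apply/subsetP=> -[x' y'] qS.
by case: (type_inv sQ hB hZ SQ pS qS) => h1 h2 h3; apply: (H x y).
Qed.

Lemma Cu_inv (G : {group {perm R}}) (X : {set R * R}) :
  (forall h r a b, h \in G -> ((h a, h b) \in Crel r) = ((a, b) \in Crel r)) ->
  (forall h, h \in G -> h 0 = 0) ->
  Cu_rel K X -> forall h x y, h \in G -> ((h x, h y) \in X) = ((x, y) \in X).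
Proof.
move=> hC h0 cX.
have relX : is_rel (Qo G) X.
  apply: cX; first exact: Qo_scheme.
    move=> Y hY S /imsetP[p _ ->].
    have sub : orb2 G p \subset Crel (p.2 - p.1).
      apply/subsetP=> q /orb2P[h hG ->]; rewrite hC //.
      by case: p => a b; rewrite CrelE orbK_refl.
    case: (hY _ (Crel_in (p.2 - p.1))) => H.
      by left; apply: subset_trans H.
    by right; apply: disjointWl H.
  move=> Y; rewrite inE => /eqP -> S /imsetP[[a b] _ ->].
  case: (boolP ((a, b) == (0, 0))) => [/eqP [-> ->]|ne].
    by left; apply/subsetP=> q /orb2P[h hG ->]; rewrite /= h0 // inE.
  right; rewrite -setI_eq0; apply/eqP/setP=> q; rewrite !inE.
  apply/negP=> /andP[/orb2P[h hG ->]] /= /eqP [e1 e2].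
  have f1 : a = 0 by apply: (@perm_inj _ h); rewrite h0 //; exact: e1.
  have f2 : b = 0 by apply: (@perm_inj _ h); rewrite h0 //; exact: e2.
  by rewrite f1 f2 eqxx in ne.
move=> h x y hG.
have oQ : orb2 G (x, y) \in Qo G by apply: imset_f.
have i1 : (x, y) \in orb2 G (x, y) by apply: orb2_refl.
have i2 : (h x, h y) \in orb2 G (x, y) by apply: (orb2_act (x, y) hG).
apply/idP/idP => H.
  exact: (subsetP (rel_sub relX oQ i2 H)).
exact: (subsetP (rel_sub relX oQ i1 H)).
Qed.

Lemma AutCyc_Crel f r a b : f \in AutCyc K -> ((f a, f b) \in Crel r) = ((a, b) \in Crel r).
Proof.
rewrite inE => /forall_inP/(_ _ (Crel_in r))/forallP/(_ a)/forallP/(_ b)/eqP.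
by move=> ->.
Qed.

Lemma AutCuv_Cu f (X : {set R * R}) x y : f \in AutCuv K -> Cu_rel K X ->
  ((f x, f y) \in X) = ((x, y) \in X).
Proof.
rewrite inE => /andP[fA /andP[/eqP f0 _]] cX.
apply: (Cu_inv (G := <[f]>%G)) => //; last exact: cycle_id.
  move=> h r a b /cycleP[n ->]; elim: n a b => [|n IH] a b.
    by rewrite expg0 !perm1.
  by rewrite expgS !permM IH AutCyc_Crel.
move=> h /cycleP[n ->]; elim: n => [|n IH]; first by rewrite expg0 perm1.
by rewrite expgS permM f0 IH.
Qed.



Lemma AutCuv_orb f x : f \in AutCuv K -> f x \in orb x.
Proof.
rewrite inE => /andP[fA /andP[/eqP f0 _]].
have := AutCyc_Crel x 0 x fA; rewrite f0 !CrelE !subr0 orbK_refl.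
by move->.
Qed.

Lemma AutCuv_unit f x : f \in AutCuv K -> (f x \in unitsR R) = (x \in unitsR R).
Proof. by move=> fA; rewrite !inE (orbK_unit (AutCuv_orb x fA)). Qed.

Lemma AutCuv_N f : f \in AutCuv K -> f \in ('N(unitsR R | 'P))%g.
Proof. by move=> fA; apply/astabsP=> x; rewrite /= AutCuv_unit. Qed.

End Cyc.


Section Cp.
Variable R : finComUnitRingType.
Variable K : {group {unit R}}.
Notation orb := (Defs.orbK K).
Notation U := (unitsR R).

Lemma Cp_setD (X1 X2 : {set R * R}) : Cp_rel K X1 -> Cp_rel K X2 -> Cp_rel K (X1 :\: X2).
Proof.
move=> [[Y1 [c1 ->]] i1] [[Y2 [c2 ->]] i2]; split.
  exists (Y1 :\: Y2); split; first exact: closure_setD.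
  apply/setP=> p; rewrite !inE.
  by case: (p \in Y1); case: (p \in Y2); case: (p.1 \is a GRing.unit); case: (p.2 \is a GRing.unit).
move=> a x y ua /setDP[h1 n2]; apply/setDP; split; first exact: i1.
apply/negP=> h2; move/negP: n2; apply; have := i2 a^-1 _ _ ltac:(by rewrite unitrV) h2.
by rewrite !mulrK.
Qed.

Lemma Cp_dec n (X : {set R * R}) p : (#|X| <= n)%N -> Cp_rel K X -> p \in X ->
  exists Z, [/\ Cp_basis K Z, p \in Z & Z \subset X].
Proof.
elim: n X p => [|n IH] X p.
  by rewrite leqn0 cards_eq0 => /eqP -> _; rewrite in_set0.
move=> cX rX pX.
case: (classic (forall Y, Cp_rel K Y -> Y \subset X -> Y = set0 \/ Y = X)) => [Hb|Hnb].
  exists X; split => //; split => //; by apply/set0Pn; exists p.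
have [Y [cY [sYX [nY0 nYX]]]] :
    exists Y, Cp_rel K Y /\ Y \subset X /\ Y <> set0 /\ Y <> X.
  apply: NNPP => hn; apply: Hnb => Y cY sYX; apply: NNPP => hn2; apply: hn.
  by exists Y; have [? ?] := not_or_and _ _ hn2.
case: (boolP (p \in Y)) => pY.
  have pr : Y \proper X by rewrite properEneq sYX andbT; apply/eqP.
  have [Z [bZ pZ sZY]] := IH Y p (leq_trans (proper_card pr) cX) cY pY.
  by exists Z; split => //; apply: subset_trans sZY sYX.
have [q qY] : exists q, q \in Y by apply/set0Pn; apply/eqP.
have pr : X :\: Y \proper X.
  rewrite properEneq subsetDl andbT; apply/eqP=> e.
  by have := subsetP sYX q qY; rewrite -e inE qY.
have [Z [bZ pZ sZY]] := IH (X :\: Y) p (leq_trans (proper_card pr) cX) (Cp_setD rX cY) ltac:(by rewrite inE pY pX).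
by exists Z; split => //; apply: subset_trans sZY (subsetDl _ _).
Qed.

Lemma AutCp_rel g (X : {set R * R}) x y : AutCp K g -> Cp_rel K X ->
  ((x, y) \in X) = ((g x, g y) \in X).
Proof.
move=> [_ hg] cX; apply/idP/idP => H.
  have [Z [bZ pZ sZ]] := Cp_dec (leqnn _) cX H.
  by apply: (subsetP sZ); rewrite -(hg Z bZ).
have [Z [bZ pZ sZ]] := Cp_dec (leqnn _) cX H.
by apply: (subsetP sZ); rewrite (hg Z bZ).
Qed.

Lemma restr_Cp f : f \in AutCuv K -> AutA K (restr_perm U f).
Proof.
move=> fA; have fN := AutCuv_N fA.
have u1 : (1 : R) \in U by rewrite inE unitr1.
have f1 : f 1 = 1 by move: fA; rewrite inE => /andP[_ /andP[_ /eqP]].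
split; last by rewrite restr_permE.
split; first exact: restr_perm_on.
move=> X [[[Y [cY ->]] _] _ _] x y; rewrite !inE.
have ron := restr_perm_on U f.
have [ux|nux] := boolP (x \in U); last first.
  by rewrite /= (out_perm ron nux); move: nux; rewrite inE => /negbTE ->; rewrite /= !andbF.
have [uy|nuy] := boolP (y \in U); last first.
  by rewrite /= (out_perm ron nuy); move: nuy; rewrite inE => /negbTE ->; rewrite /= !andbF.
have fx : f x \in U by rewrite (AutCuv_unit x fA).
have fy : f y \in U by rewrite (AutCuv_unit y fA).
rewrite inE in fx; rewrite inE in fy.
rewrite /= !restr_permE // (AutCuv_Cu (K := K)) //.
by move: ux uy; rewrite !inE fx fy => -> ->.
Qed.

End Cp.


Section Field.
Variable R : finComUnitRingType.
Variable K : {group {unit R}}.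
Notation orb := (Defs.orbK K).
Notation U := (unitsR R).

Definition Es (s : R) : {set R * R} :=
  [set p : R * R | [&& p.1 \is a GRing.unit, p.2 \is a GRing.unit & p.2 * p.1^-1 \in orb s]].
Definition Dt (t : R) : {set R * R} :=
  [set p : R * R | [&& p.1 \is a GRing.unit, p.2 \is a GRing.unit & (p.2 - p.1) * p.1^-1 \in orb t]].

Lemma orbK_memE a b r : orb a = orb b -> (a \in orb r) = (b \in orb r).
Proof.
move=> e; apply/idP/idP => /orbK_sym; [rewrite e | rewrite -e] => /orbK_sym //.
Qed.

Lemma Cp_gen (F : R -> R -> R) s :
  (forall x y x' y', x \is a GRing.unit -> x' \in orb x -> y' \in orb y ->
     y' - x' \in orb (y - x) -> F x' y' \in orb (F x y)) ->
  (forall a x y, a \is a GRing.unit -> x \is a GRing.unit -> F (x * a) (y * a) = F x y) ->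
  Cp_rel K [set p : R * R | [&& p.1 \is a GRing.unit, p.2 \is a GRing.unit & F p.1 p.2 \in orb s]].
Proof.
move=> HF HI; split.
  exists [set p : R * R | [&& p.1 \is a GRing.unit, p.2 \is a GRing.unit & F p.1 p.2 \in orb s]].
  split.
    apply: Cu_type => x y x' y' h1 h2 h3; rewrite !inE /= => /and3P[ux uy hF].
    rewrite (orbK_unit h1) (orbK_unit h2) ux uy /=.
    by rewrite (orbK_memE _ (orbK_eq (HF _ _ _ _ ux h1 h2 h3))).
  apply/setP=> p; rewrite !inE.
  by case: (p.1 \is a GRing.unit); case: (p.2 \is a GRing.unit); case: (F p.1 p.2 \in orb s).
move=> a x y ua; rewrite !inE /= => /and3P[ux uy hF].
by rewrite !unitrMl // ux uy HI.
Qed.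

Lemma Es_rel s : Cp_rel K (Es s).
Proof.
apply: (Cp_gen (F := fun x y => y * x^-1)).
  by move=> x y x' y' ux h1 h2 _; apply: orbK_mul => //; apply: orbK_inv.
by move=> a x y ua ux; rewrite invrM // mulrA mulrK.
Qed.

Lemma Dt_rel t : Cp_rel K (Dt t).
Proof.
apply: (Cp_gen (F := fun x y => (y - x) * x^-1)).
  by move=> x y x' y' ux h1 h2 h3; apply: orbK_mul => //; apply: orbK_inv.
by move=> a x y ua ux; rewrite invrM // -mulrBl mulrA mulrK.
Qed.

Hypothesis hF : forall x : R, x != 0 -> x \is a GRing.unit.

Lemma AutA_Cyc g : AutA K g -> g \in AutCuv K.
Proof.
case=> gA g1; have [gon _] := gA.
have g0 : g 0 = 0 by apply: (out_perm gon); rewrite inE unitr0.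
have gorb x : orb (g x) = orb x.
  have [ux|nux] := boolP (x \in U); last by rewrite (out_perm gon nux).
  apply: orbK_eq; rewrite inE in ux.
  have : (1, x) \in Es x by rewrite !inE /= unitr1 ux invr1 mulr1 orbK_refl.
  rewrite (AutCp_rel _ _ gA (Es_rel x)) g1 !inE /= => /and3P[_ _].
  by rewrite invr1 mulr1.
have key x y : orb (g y - g x) = orb (y - x).
  case: (eqVneq x 0) => [->|/hF ux]; first by rewrite g0 !subr0.
  case: (eqVneq y 0) => [->|/hF uy].
    by rewrite g0 !sub0r; apply: orbK_eq; apply: orbK_opp; rewrite -(gorb x) orbK_refl.
  have gx : g x \in orb x by rewrite -(gorb x) orbK_refl.
  have : (x, y) \in Dt ((y - x) * x^-1) by rewrite !inE /= ux uy orbK_refl.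
  rewrite (AutCp_rel _ _ gA (Dt_rel _)) !inE /= => /and3P[ugx _ h].
  apply: orbK_eq; have := orbK_mul h gx; rewrite !divrK //.
rewrite !inE g0 g1 !eqxx !andbT; apply/forall_inP=> S /imsetP[r _ ->].
apply/forallP=> x; apply/forallP=> y; rewrite !inE /=.
by rewrite (orbK_memE _ (key x y)).
Qed.

End Field.

Theorem theorem4p3 (R : finComUnitRingType) (K : {group {unit R}}) :
  (* (1) *)
  ((forall f, f \in AutCuv K -> f @: unitsR R = unitsR R) /\
   (forall f, f \in AutCuv K -> AutA K (restr_perm (unitsR R) f)) /\
   (forall f g, f \in AutCuv K -> g \in AutCuv K ->
      restr_perm (unitsR R) (f * g)%g
      = (restr_perm (unitsR R) f * restr_perm (unitsR R) g)%g)) /\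
  (* (2) *)
  ((forall x : R, x != 0 -> x \is a GRing.unit) ->
     {in AutCuv K &, injective (restr_perm (unitsR R))} /\
     (forall g, AutA K g <-> exists2 f, f \in AutCuv K & g = restr_perm (unitsR R) f)).
Proof.
split; [split; [|split] | move=> hF; split].
- move=> f fA; apply/eqP; rewrite eqEcard card_imset; last exact: perm_inj.
  rewrite leqnn andbT; apply/subsetP=> _ /imsetP[x xU ->].
  by rewrite (AutCuv_unit _ fA).
- by move=> f fA; apply: restr_Cp.
- move=> f g fA gA; rewrite morphM; [by [] | exact: (AutCuv_N fA) | exact: (AutCuv_N gA)].
- move=> f g fA gA e; apply/permP=> x.
  have [xU|nxU] := boolP (x \in unitsR R).
    by rewrite -(restr_permE (AutCuv_N fA) xU) e restr_permE // (AutCuv_N gA).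
  have x0 : x = 0.
    by apply/eqP; apply: contraR nxU => /hF; rewrite inE.
  move: fA gA; rewrite !inE x0 => /andP[_ /andP[/eqP -> _]] /andP[_ /andP[/eqP -> _]].
  by [].
- move=> g; split.
    move=> gA; exists g; first exact: AutA_Cyc.
    have [[gon _] _] := gA.
    have gN : g \in ('N(unitsR R | 'P))%g.
      by apply/astabsP=> x; rewrite /= (perm_closed _ gon).
    apply/permP=> x; have [xU|nxU] := boolP (x \in unitsR R).
      by rewrite restr_permE.
    by rewrite (out_perm gon nxU) (out_perm (restr_perm_on _ _) nxU).
  by case=> f fA ->; apply: restr_Cp.
Qed.
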